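(* Let $k\in\mathbb{N}$, let $A\subseteq\mathbb{N}$ with $\min(A)=0$ and $\max(A)\le k$, and suppose $A=B+C$ with $B,C\subseteq\mathbb{N}$ and $\max(B)\le\max(C)$. Define \[C_B=C\cup\{s\in\{0,\ldots,k\}\setminus A: s<\max(B)\}\cup\{s-\max(B): s\in\{0,\ldots,k\}\setminus A,\ s\ge\max(B)\}.\] Then $B+C_B=\{0,1,\ldots,k\}$.
   Context: $\mathbb{N}=\{0,1,\ldots\}$ and $X+Y=\{x+y:x\in X,y\in Y\}$. *)

(* Defs.v *)
From Stdlib Require Import Arith Lia.

Definition sumset (X Y : nat -> Prop) : nat -> Prop :=
  fun s => exists x y, X x /\ Y y /\ s = x + y.

Definition is_min (S : nat -> Prop) (m : nat) : Prop :=
  S m /\ forall x, S x -> m <= x.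
Definition is_max (S : nat -> Prop) (m : nat) : Prop :=
  S m /\ forall x, S x -> x <= m.

Definition CB (k : nat) (A C : nat -> Prop) (mB : nat) : nat -> Prop :=
  fun c => C c
    \/ (exists s, s <= k /\ ~ A s /\ s < mB /\ c = s)
    \/ (exists s, s <= k /\ ~ A s /\ mB <= s /\ c = s - mB).

(* Main.v *)
Require Import Defs.
From Stdlib Require Import Arith Lia Classical.

Theorem mainTheorem14 (k : nat) (A B C : nat -> Prop) (mA mB mC : nat) :
  is_min A 0 -> is_max A mA -> mA <= k ->
  (forall s, A s <-> sumset B C s) ->
  is_max B mB -> is_max C mC -> mB <= mC ->
  forall s, sumset B (CB k A C mB) s <-> s <= k.
Proof.
  intros [A0 _] [_ HAm] Hk HA [HBm HBle] [HCm HCle] Hmm s.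
  assert (HAmm : A (mB + mC)) by (apply HA; exists mB, mC; auto).
  pose proof (HAm _ HAmm) as Hbig.
  destruct (proj1 (HA 0) A0) as (b0 & c0 & Hb0 & Hc0 & E0).
  assert (b0 = 0) by lia. subst b0.
  split.
  - intros (b & c & Hb & Hc & ->).
    pose proof (HBle _ Hb).
    destruct Hc as [Hc | [(s' & ? & ? & ? & ->) | (s' & ? & ? & ? & ->)]].
    + assert (A (b + c)) by (apply HA; exists b, c; auto).
      pose proof (HAm _ H0). lia.
    + lia.
    + lia.
  - intros Hs.
    destruct (Classical_Prop.classic (A s)) as [HAs | HnA].
    + destruct (proj1 (HA s) HAs) as (b & c & Hb & Hc & ->).
      exists b, c. repeat split; auto. left; auto.
    + destruct (Nat.lt_ge_cases s mB).
      * exists 0, s. repeat split; auto. right; left. exists s; auto.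
      * exists mB, (s - mB). repeat split; auto; [|lia].
        right; right. exists s; auto.
Qed.
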